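(* Let $T\in RB(n)$ have strictly positive edge lengths satisfying (MC), and let $l_{\max}=\max_e l(e)$. Let $i$ be a leaf, and let $e_h,\dots,e_0$ be the edges of the path from the root to $i$, where $e_0$ is the pendant edge at $i$ and $e_h$ is incident with the root. Write $l_j=l(e_j)$, and let $n_j$ be the number of leaves descended from the endpoint of $e_j$ farther from the root. Then for every $1\le j\le h$, $$n_j \;\geq\; 2^{\lceil \sum_{k=0}^{j-1} l_k / l_{\max}\rceil}.$$
   Context: $RB(n)$ is the set of rooted binary phylogenetic trees on leaf set $[n]=\{1,\dots,n\}$: rooted trees in which every non-leaf vertex has out-degree exactly 2 and the leaves are labelled bijectively by $[n]$. (MC) is the condition that the sum of edge lengths from the root to each leaf is the same for all leaves. *)

(* Defs.v *)
From HB Require Import structures.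
From mathcomp Require Import all_boot all_order all_algebra.
Set Implicit Arguments. Unset Strict Implicit. Unset Printing Implicit Defensive.
Import Order.TTheory GRing.Theory Num.Theory.
Local Open Scope ring_scope.

(* A rooted binary tree with leaf labels in nat; each internal vertex has
   exactly two children, and each child edge carries a length. The root is
   the top node (it has no incoming edge). *)
Inductive ptree (R : Type) : Type :=
| PLeaf (lab : nat)
| PNode (l1 : R) (t1 : ptree R) (l2 : R) (t2 : ptree R).
Arguments PLeaf {R}.

Fixpoint leaves (R : Type) (t : ptree R) : seq nat :=
  match t with
  | PLeaf k => [:: k]
  | PNode _ t1 _ t2 => leaves t1 ++ leaves t2
  end.

Fixpoint edge_lengths (R : Type) (t : ptree R) : seq R :=
  match t with
  | PLeaf _ => [::]
  | PNode l1 t1 l2 t2 => l1 :: l2 :: edge_lengths t1 ++ edge_lengths t2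
  end.

Definition is_RB (R : Type) (n : nat) (t : ptree R) : Prop :=
  perm_eq (leaves t) (iota 1 n).

Definition pos_lengths (R : numDomainType) (t : ptree R) : Prop :=
  forall l, l \in edge_lengths t -> 0 < l.

Fixpoint depths (R : numDomainType) (t : ptree R) : seq R :=
  match t with
  | PLeaf _ => [:: 0]
  | PNode l1 t1 l2 t2 => map (fun d => l1 + d) (depths t1) ++ map (fun d => l2 + d) (depths t2)
  end.

Definition MC (R : numDomainType) (t : ptree R) : Prop :=
  forall x y, x \in depths t -> y \in depths t -> x = y.

Definition lmax (R : realDomainType) (t : ptree R) : R :=
  foldr Num.max 0 (edge_lengths t).

(* path from the root to leaf i: the list of edges (length, subtree below the
   edge) ordered from the root edge e_h down to the pendant edge e_0. *)
Fixpoint rpath (R : Type) (t : ptree R) (i : nat) : option (seq (R * ptree R)) :=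
  match t with
  | PLeaf k => if k == i then Some [::] else None
  | PNode l1 t1 l2 t2 =>
      match rpath t1 i with
      | Some p => Some ((l1, t1) :: p)
      | None =>
          match rpath t2 i with
          | Some p => Some ((l2, t2) :: p)
          | None => None
          end
      end
  end.

(* Main.v *)
Require Import Defs.
From HB Require Import structures.
From mathcomp Require Import all_boot all_order all_algebra.
From mathcomp Require Import ring lra.
Import Order.TTheory GRing.Theory Num.Theory.
Local Open Scope ring_scope.

Lemma exprz2_mono (R : archiRealFieldType) (a b : int) :
  a <= b -> (2 : R) ^ a <= 2 ^ b.
Proof.
move=> hab.
have -> : b = a + (b - a) by rewrite addrC subrK.
have h2 : (2 : R) != 0 by rewrite pnatr_eq0.
rewrite expfzDr //.
have ha : (0 : R) < 2 ^ a by apply: (exprz_gte0 R).2.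
have : 0 <= b - a by rewrite subr_ge0.
case: (b - a) => [k|k] // _.
rewrite -[X in X <= _]mulr1 ler_pM2l //.
have -> : (2 : R) ^ (Posz k) = 2 ^+ k by [].
by rewrite exprn_ege1 // ler1n.
Qed.

Lemma keyA (R : archiRealFieldType) (L : R) (t : ptree R) : 0 < L ->
  forall H, (forall l, l \in edge_lengths t -> l <= L) ->
  (forall d, d \in depths t -> d = H) ->
  (2:R) ^ Num.ceil (H / L) <= (size (leaves t))%:R.
Proof.
move=> L0; elim: t => [lab|l1 t1 IH1 l2 t2 IH2] H hE hD /=.
  by rewrite -(hD 0) ?inE // mul0r ceil0 expr0z.
have hL : L != 0 by rewrite gt_eqF.
have step : forall l s, l \in edge_lengths (PNode l1 t1 l2 t2) ->
    (forall l, l \in edge_lengths s -> l <= L) ->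
    (forall d, d \in depths s -> l + d = H) ->
    (forall H', (forall l, l \in edge_lengths s -> l <= L) ->
       (forall d, d \in depths s -> d = H') ->
       (2:R) ^ Num.ceil (H' / L) <= (size (leaves s))%:R) ->
    (2:R) ^ (Num.ceil (H / L) - 1) <= (size (leaves s))%:R.
  move=> l s hl hEs hDs IH.
  apply: le_trans (IH (H - l) hEs _); last first.
    by move=> d /hDs <-; ring.
  apply: exprz2_mono.
  rewrite lerBlDr ceil_le_int.
  have hlL : l <= L by apply: hE.
  have := ceil_itv ((H - l) / L) => /andP [_ hc].
  rewrite intrD.
  apply: le_trans (_ : (H - l) / L + 1 <= _); last by rewrite lerD2r.
  have -> : (H - l) / L + 1 = H / L + (L - l) / L by field.
  by rewrite lerDl divr_ge0 // ?subr_ge0 // ltW.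
have h1 := step l1 t1 (mem_head _ _)
  (fun l h => hE l ltac:(by rewrite !inE mem_cat h !orbT))
  (fun d h => hD (l1 + d) ltac:(by rewrite mem_cat; apply/orP; left; apply: (map_f (fun d => l1 + d)))) (IH1).
have h2 := step l2 t2 ltac:(by rewrite !inE eqxx orbT)
  (fun l h => hE l ltac:(by rewrite !inE mem_cat h !orbT))
  (fun d h => hD (l2 + d) ltac:(by rewrite mem_cat; apply/orP; right; apply: (map_f (fun d => l2 + d)))) (IH2).
rewrite size_cat natrD.
have -> : Num.ceil (H / L) = (Num.ceil (H / L) - 1) + 1 by rewrite subrK.
rewrite expfzDr ?pnatr_eq0 // expr1z mulrDr mulr1.
by apply: lerD.
Qed.

Lemma path_sum (R : numDomainType) (t : ptree R) i p :
  rpath t i = Some p -> \sum_(x <- p) x.1 \in depths t.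
Proof.
elim: t p => [lab|l1 t1 IH1 l2 t2 IH2] p /=.
  by case: eqP => // _ [<-]; rewrite big_nil inE.
case E1: (rpath t1 i) => [p'|].
  move=> [<-]; rewrite big_cons mem_cat; apply/orP; left.
  exact: (map_f (fun d => l1 + d) (IH1 _ E1)).
case E2: (rpath t2 i) => [p'|] //.
move=> [<-]; rewrite big_cons mem_cat; apply/orP; right.
exact: (map_f (fun d => l2 + d) (IH2 _ E2)).
Qed.


Lemma path_sub (R : numDomainType) (t : ptree R) i p :
  rpath t i = Some p -> forall j, (j < size p)%N ->
  let s := (nth (0, PLeaf 0%N) (rev p) j).2 in
  (\sum_(0 <= k < j) (nth (0, PLeaf 0%N) (rev p) k).1) \in depths s /\
  {subset edge_lengths s <= edge_lengths t} /\ (MC t -> MC s).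
Proof.
elim: t p => [lab|l1 t1 IH1 l2 t2 IH2] p /=.
  by case: eqP => // _ [<-].
have gen : forall l s p', rpath s i = Some p' ->
    {subset edge_lengths s <= edge_lengths (PNode l1 t1 l2 t2)} ->
    (MC (PNode l1 t1 l2 t2) -> MC s) ->
    (forall p, rpath s i = Some p -> forall j, (j < size p)%N ->
      let s' := (nth (0, PLeaf 0%N) (rev p) j).2 in
      (\sum_(0 <= k < j) (nth (0, PLeaf 0%N) (rev p) k).1) \in depths s' /\
      {subset edge_lengths s' <= edge_lengths s} /\ (MC s -> MC s')) ->
    forall j, (j < size ((l, s) :: p'))%N ->
    let s' := (nth (0, PLeaf 0%N) (rev ((l, s) :: p')) j).2 in
    (\sum_(0 <= k < j) (nth (0, PLeaf 0%N) (rev ((l, s) :: p')) k).1) \in depths s' /\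
    {subset edge_lengths s' <= edge_lengths (PNode l1 t1 l2 t2)} /\
    (MC (PNode l1 t1 l2 t2) -> MC s').
  move=> l s p' E hsub hmc IH j hj s'.
  rewrite /s' rev_cons.
  have hS : forall k, (k < size p')%N ->
      nth (0, PLeaf 0%N) (rcons (rev p') (l, s)) k = nth (0, PLeaf 0%N) (rev p') k.
    by move=> k hk; rewrite nth_rcons size_rev hk.
  rewrite /= ltnS leq_eqVlt in hj; case/orP: hj => [/eqP -> | hj].
    rewrite nth_rcons size_rev ltnn eqxx /=.
    rewrite (eq_big_nat _ _ (F2 := fun k => (nth (0, PLeaf 0%N) (rev p') k).1)); last first.
      by move=> k /andP [_ hk]; rewrite hS.
    have <- : \sum_(x <- rev p') x.1 = \sum_(0 <= k < size p') (nth (0, PLeaf 0%N) (rev p') k).1.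
      by rewrite (big_nth (0, PLeaf 0%N)) size_rev.
    rewrite big_rev.
    by split; [exact: path_sum E | split].
  rewrite hS //.
  rewrite (eq_big_nat _ _ (F2 := fun k => (nth (0, PLeaf 0%N) (rev p') k).1)); last first.
    by move=> k /andP [_ hk]; rewrite hS // (ltn_trans hk hj).
  have [h1 [h2 h3]] := IH p' E j hj.
  split => //; split; first by move=> x /h2 /hsub.
  by move=> /hmc /h3.
case E1: (rpath t1 i) => [p'|].
  move=> [<-]; apply: gen => //.
  - by move=> x hx; rewrite !inE mem_cat hx !orbT.
  - move=> hmc x y hx hy; apply: (addrI l1); apply: hmc.
    + by rewrite mem_cat; apply/orP; left; apply: (map_f (fun d => l1 + d)).
    + by rewrite mem_cat; apply/orP; left; apply: (map_f (fun d => l1 + d)).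
case E2: (rpath t2 i) => [p'|] //.
move=> [<-]; apply: gen => //.
- by move=> x hx; rewrite !inE mem_cat hx !orbT.
- move=> hmc x y hx hy; apply: (addrI l2); apply: hmc.
  + by rewrite mem_cat; apply/orP; right; apply: (map_f (fun d => l2 + d)).
  + by rewrite mem_cat; apply/orP; right; apply: (map_f (fun d => l2 + d)).
Qed.

Lemma foldr_max_ge (R : realDomainType) (s : seq R) :
  0 <= foldr Num.max 0 s /\ forall l, l \in s -> l <= foldr Num.max 0 s.
Proof.
elim: s => [|a s [h0 h1]] /=; first by split.
split; first by rewrite le_max h0 orbT.
move=> l; rewrite inE => /orP [/eqP -> | hl]; first by rewrite le_max lexx.
by rewrite le_max h1 ?orbT.
Qed.

Lemma leaves_gt0 (R : Type) (t : ptree R) : (0 < size (leaves t))%N.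
Proof. by elim: t => //= l1 t1 IH1 l2 t2 IH2; rewrite size_cat addn_gt0 IH1. Qed.

Theorem mainTheorem4 (R : archiRealFieldType) (n : nat) (t : ptree R) (i : nat)
    (p : seq (R * ptree R)) :
  is_RB n t -> pos_lengths t -> MC t ->
  rpath t i = Some p ->
  forall j : nat, (1 <= j < size p)%N ->
    (2 : R) ^ Num.ceil ((\sum_(0 <= k < j) (nth (0, PLeaf 0%N) (rev p) k).1) / lmax t)
      <= (size (leaves (nth (0, PLeaf 0%N) (rev p) j).2))%:R.
Proof.
move=> _ _ hmc E j /andP [_ hj].
have [hd [hsub hmcs]] := @path_sub R t i p E j hj.
have [L0 hL] := @foldr_max_ge R (edge_lengths t).
rewrite /lmax; move: L0 hL; set L := foldr _ _ _ => L0 hL.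
case: (eqVneq L 0) => [-> | hL0].
  by rewrite invr0 mulr0 ceil0 expr0z ler1n leaves_gt0.
apply: keyA; first by rewrite lt0r hL0.
  by move=> l /hsub /hL.
by move=> d hd'; apply: (hmcs hmc).
Qed.
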